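(* Let $s\ge r\ge2$, let $Q$ be an $s$-vertex $r$-graph and let $\mathcal P$ be a hereditary and multiplicative property of $r$-graphs. Then $\lambda^{(p)}(Q,\mathcal P)=\pi(Q,\mathcal P)$ for every $p\ge1$; in particular $\mathcal P$ is $Q$-flat.
   Context: An $r$-graph ($r\ge 2$) is a finite hypergraph all of whose edges have exactly $r$ vertices. For $I\subseteq V(H)$, $H[I]$ denotes the induced subhypergraph on $I$. For an $s$-vertex $r$-graph $Q$ and an $r$-graph $H$, $\mathcal N(Q,H)$ is the number of (not necessarily induced) subgraphs of $H$ isomorphic to $Q$. For an $n$-vertex $r$-graph $H$ with vertex set $[n]$ and $\mathbf x\in\mathbb R^n$, $P_{Q,H}(\mathbf x)=s!\sum_{\{i_1,\dots,i_s\}\in\binom{[n]}{s}}\mathcal N(Q,H[\{i_1,\dots,i_s\}])\,x_{i_1}\cdots x_{i_s}$, and for $p\ge1$, $\lambda^{(p)}(Q,H)=\max_{\|\mathbf x\|_p=1}P_{Q,H}(\mathbf x)$. A hereditary property $\mathcal P$ of $r$-graphs is a family of $r$-graphs closed under isomorphism and under taking induced subgraphs; as a standing assumption, whenever $H\in\mathcal P$, the disjoint union of $H$ with an isolated vertex is also in $\mathcal P$. $\mathcal P_n$ is the set of members of $\mathcal P$ with $n$ vertices. $ex(Q,\mathcal P_n)=\max\{\mathcal N(Q,H):H\in\mathcal P_n\}$ and $\pi(Q,\mathcal P)=\lim_{n\to\infty}ex(Q,\mathcal P_n)/\binom ns$ (this limit exists). $\lambda^{(p)}(Q,\mathcal P_n)=\max\{\lambda^{(p)}(Q,H):H\in\mathcal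 P_n\}$ and $\lambda^{(p)}(Q,\mathcal P)=\lim_{n\to\infty}\lambda^{(p)}(Q,\mathcal P_n)n^{s/p-s}$ (this limit exists). For an $r$-graph $H$ on vertex set $[n]$ and positive integers $k_1,\dots,k_n$, the blow-up $H(k_1,\dots,k_n)$ is obtained by replacing each vertex $i$ by a class $V_i$ of $k_i$ vertices (classes pairwise disjoint), whose edges are all $r$-sets $\{u_1,\dots,u_r\}$ with $u_j\in V_{i_j}$ for some edge $\{i_1,\dots,i_r\}\in E(H)$. $\mathcal P$ is multiplicative if every blow-up of every member of $\mathcal P$ is in $\mathcal P$. $\mathcal P$ is $Q$-flat if $\lambda^{(1)}(Q,\mathcal P)=\pi(Q,\mathcal P)$. *)

(* Defs.v *)
From HB Require Import structures.
From mathcomp Require Import all_boot all_order all_algebra.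
From mathcomp Require Import all_classical all_reals all_analysis.
Set Implicit Arguments. Unset Strict Implicit. Unset Printing Implicit Defensive.
Import Order.TTheory GRing.Theory Num.Theory numFieldNormedType.Exports.
Local Open Scope ring_scope.

Notation hgraph n := {set {set 'I_n}}.

Definition uniform (r : nat) {T : finType} (E : {set {set T}}) : bool :=
  [forall e in E, #|e| == r].

Definition pullback {T U : finType} (f : T -> U) (E : {set {set U}})
  : {set {set T}} := [set e : {set T} | f @: e \in E].

Definition hprop := forall n : nat, pred (hgraph n).

Definition prop_of_rgraphs (r : nat) (P : hprop) : Prop :=
  forall n (E : hgraph n), P n E -> uniform r E.

Definition iso_closed (P : hprop) : Prop :=
  forall n m (f : 'I_m -> 'I_n) (E : hgraph n),
    bijective f -> P n E -> P m (pullback f E).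

(* closed under induced subgraphs: H[I] with I the image of the injective f
   (relabelled along f) *)
Definition induced_closed (P : hprop) : Prop :=
  forall n m (f : 'I_m -> 'I_n) (E : hgraph n),
    injective f -> P n E -> P m (pullback f E).

Definition isolated_closed (P : hprop) : Prop :=
  forall n (E : hgraph n),
    P n E -> P n.+1 ((fun e : {set 'I_n} => widen_ord (leqnSn n) @: e) @: E).

Definition hereditary (P : hprop) : Prop := iso_closed P /\ induced_closed P.

Definition blowup_vert {n : nat} (k : 'I_n -> nat) := {i : 'I_n & 'I_(k i)}.

Definition blowup (r : nat) {n : nat} (k : 'I_n -> nat) (E : hgraph n)
  : {set {set blowup_vert k}} :=
  [set e : {set blowup_vert k} | (#|e| == r) && ((tag @: e) \in E)].

Definition multiplicative (r : nat) (P : hprop) : Prop :=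
  forall n (E : hgraph n) (k : 'I_n -> nat),
    (forall i, (0 < k i)%N) -> P n E ->
    forall N (phi : 'I_N -> blowup_vert k), bijective phi ->
      P N (pullback phi (blowup r k E)).

Definition copies_in {s n : nat} (Q : hgraph s) (E : hgraph n) (I : {set 'I_n})
  : nat :=
  #|[set VE : {set 'I_n} * hgraph n |
      [&& VE.1 \subset I, VE.2 \subset E &
         [exists f : {ffun 'I_s -> 'I_n},
            [&& injectiveb f, f @: [set: 'I_s]%SET == VE.1 &
                VE.2 == ((fun e : {set 'I_s} => f @: e) @: Q)]]]]|.

Definition copies {s n : nat} (Q : hgraph s) (E : hgraph n) : nat :=
  copies_in Q E [set: 'I_n]%SET.

Section Analytic.
Variable R : realType.

Definition PQH {s n : nat} (Q : hgraph s) (E : hgraph n) (x : 'I_n -> R) : R :=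
  (s`!)%:R * \sum_(I : {set 'I_n} | #|I| == s)
                (copies_in Q E I)%:R * \prod_(i in I) x i.

Definition pnorm {n : nat} (p : R) (x : 'I_n -> R) : R :=
  powR (\sum_(i < n) powR `|x i| p) (p^-1).

Definition lambdaH {s n : nat} (p : R) (Q : hgraph s) (E : hgraph n) : R :=
  sup [set PQH Q E x | x in [set x : 'I_n -> R | pnorm p x = 1]]%classic.

Definition lambdaPn {s : nat} (p : R) (Q : hgraph s) (P : hprop) (n : nat) : R :=
  sup [set lambdaH p Q E | E in [set E : hgraph n | P n E]]%classic.

Definition exQ {s : nat} (Q : hgraph s) (P : hprop) (n : nat) : nat :=
  \max_(E : hgraph n | P n E) copies Q E.

Definition piQ {s : nat} (Q : hgraph s) (P : hprop) : R :=
  limn (fun n : nat => (exQ Q P n)%:R / ('C(n, s))%:R : R).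

Definition lambdaP {s : nat} (p : R) (Q : hgraph s) (P : hprop) : R :=
  limn (fun n : nat => lambdaPn p Q P n * powR (n%:R) (s%:R / p - s%:R)).

Definition Qflat {s : nat} (Q : hgraph s) (P : hprop) : Prop :=
  lambdaP 1 Q P = piQ Q P.

End Analytic.

(* Main.v *)
Require Import Defs.
From mathcomp Require Import all_boot all_order all_algebra.
From mathcomp Require Import all_classical all_reals all_analysis.
From mathcomp Require Import ring lra.

Module PartA.
Import Order.TTheory GRing.Theory Num.Theory numFieldNormedType.Exports.
Local Open Scope ring_scope.
Local Open Scope classical_set_scope.

Section An.
Variable R : realType.

Lemma cvg_pow (f : nat -> R) (l : R) m : f @ \oo --> l ->
  (fun x => f x ^+ m) @ \oo --> l ^+ m.
Proof.
move=> hf; elim: m => [|m IH].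
  by under eq_fun do rewrite expr0; rewrite expr0; exact: cvg_cst.
under eq_fun do rewrite exprS; rewrite exprS; exact: cvgM.
Qed.

Lemma cvg_ratio (a : R) m : (fun N : nat => (1 + a / N%:R) ^+ m) @ \oo --> (1:R).
Proof.
suff H : (fun N : nat => 1 + a / N%:R) @ \oo --> (1:R).
  by have := @cvg_pow _ _ m H; rewrite expr1n.
have h : (fun n => 1 + a * harmonic n) @ \oo --> (1 + a * 0 : R).
  apply: cvgD; first exact: cvg_cst.
  apply: cvgM; [exact: cvg_cst| exact: cvg_harmonic].
rewrite mulr0 addr0 in h.
rewrite -cvg_shiftS; exact: h.
Qed.

End An.

End PartA.

Module PartB.
Import Order.TTheory GRing.Theory Num.Theory numFieldNormedType.Exports.
Local Open Scope ring_scope.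

Definition cset {s n : nat} (Q : hgraph s) (E : hgraph n) (I : {set 'I_n}) :=
  [set VE : {set 'I_n} * hgraph n |
      [&& VE.1 \subset I, VE.2 \subset E &
         [exists f : {ffun 'I_s -> 'I_n},
            [&& injectiveb f, f @: [set: 'I_s]%SET == VE.1 &
                VE.2 == ((fun e : {set 'I_s} => f @: e) @: Q)]]]].

Lemma copies_inE' {s n : nat} (Q : hgraph s) (E : hgraph n) (I : {set 'I_n}) :
  copies_in Q E I = #|cset Q E I|.
Proof. by []. Qed.

Lemma cset_card1 {s n : nat} (Q : hgraph s) (E : hgraph n) (I : {set 'I_n}) VE :
  VE \in cset Q E I -> #|VE.1| = s.
Proof.
case: VE => V E'; rewrite inE => /and3P[_ _ /existsP[f /and3P[/injectiveP fi /eqP <- _]]].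
by rewrite card_imset // cardsT card_ord.
Qed.

Lemma copies_inE {s n : nat} (Q : hgraph s) (E : hgraph n) (I : {set 'I_n}) : #|I| = s ->
  copies_in Q E I = #|[set c in cset Q E [set: 'I_n]%SET | c.1 == I]|.
Proof.
move=> hI; rewrite copies_inE'; apply: eq_card => -[V E']; rewrite !inE /=.
case: existsP => [[f /and3P[/injectiveP fi /eqP fV _]]|_]; last by rewrite !andbF.
have cV : #|V| = s by rewrite -fV card_imset // cardsT card_ord.
have -> : V \subset [set: 'I_n]%SET by apply/fintype.subsetP.
by rewrite !andbT /= eqEcard cV hI leqnn andbT andbC.
Qed.

Lemma copies_le {s n : nat} (Q : hgraph s) (E : hgraph n) :
  (copies Q E <= n ^ s)%N.
Proof.
rewrite /copies copies_inE'.
pose g (f : {ffun 'I_s -> 'I_n}) := (f @: [set: 'I_s]%SET, (fun e : {set 'I_s} => f @: e) @: Q).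
apply: (@leq_trans #|[set g f | f in [set: {ffun 'I_s -> 'I_n}]%SET]|).
  apply: subset_leq_card; apply/fintype.subsetP => -[V E']; rewrite inE.
  case/and3P => _ _ /existsP[f /and3P[_ /eqP /= fV /eqP /= fE']].
  by apply/imsetP; exists f; rewrite ?inE // /g fV fE'.
by apply: leq_trans (leq_imset_card _ _) _; rewrite cardsT card_ffun !card_ord.
Qed.

Section PQHlemmas.
Variable R : realType.
Variables (s n : nat) (Q : hgraph s) (E : hgraph n).

Lemma PQH_copies (x : 'I_n -> R) : PQH Q E x =
  s`!%:R * \sum_(c in cset Q E [set: 'I_n]%SET) \prod_(i in c.1) x i.
Proof.
rewrite /PQH; congr (_ * _).
rewrite (partition_big (fun c => c.1) (fun I : {set 'I_n} => #|I| == s)) /=;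
  last by move=> c /(cset_card1 _ _ _ _) ->.
apply: eq_bigr => I /eqP hI; rewrite copies_inE //.
rewrite [RHS](eq_bigr (fun=> \prod_(i in I) x i)); last by move=> c /andP[_ /eqP ->].
rewrite sumr_const mulr_natl; congr (_ *+ _); apply: eq_card => c; rewrite !inE.
by rewrite [in RHS]unfold_in /= !inE.
Qed.

Lemma PQH_scale (a : R) (x : 'I_n -> R) :
  PQH Q E (fun i => a * x i) = a ^+ s * PQH Q E x.
Proof.
rewrite !PQH_copies mulrCA; congr (_ * _); rewrite mulr_sumr.
apply: eq_bigr => c hc; rewrite big_split /= prodr_const.
by rewrite (cset_card1 _ _ _ _ hc).

Qed.

Lemma PQH_le (x y : 'I_n -> R) : (forall i, 0 <= x i <= y i) ->
  PQH Q E x <= PQH Q E y.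
Proof.
move=> h; rewrite !PQH_copies; apply: ler_wpM2l => //.
by apply: ler_sum => c _; apply: ler_prod => i _.
Qed.

Lemma PQH_ge0 (x : 'I_n -> R) : (forall i, 0 <= x i) -> 0 <= PQH Q E x.
Proof.
move=> h; rewrite PQH_copies; apply: mulr_ge0 => //.
by apply: sumr_ge0 => c _; apply: prodr_ge0 => i _.
Qed.

Lemma PQH_abs (x : 'I_n -> R) : PQH Q E x <= PQH Q E (fun i => `|x i|).
Proof.
rewrite !PQH_copies; apply: ler_wpM2l => //.
apply: le_trans (ler_norm _) _; apply: le_trans (ler_norm_sum _ _ _) _.
by apply: ler_sum => c _; rewrite normr_prod.
Qed.

End PQHlemmas.

End PartB.

Module PartC.
Import PartB.
Set Implicit Arguments. Unset Strict Implicit.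
Import Order.TTheory GRing.Theory Num.Theory numFieldNormedType.Exports.

Section Blow.
Variables (r s n : nat) (Q : hgraph s) (E : hgraph n) (Eu : uniform r E).
Variables (k : 'I_n -> nat) (hk : forall i, (0 < k i)%N).
Variables (N : nat) (phi : 'I_N -> blowup_vert k) (psi : blowup_vert k -> 'I_N).
Hypotheses (phiK : cancel phi psi) (psiK : cancel psi phi).

Definition BV := blowup_vert k.
Definition dflt (i : 'I_n) : BV := Tagged (fun j => 'I_(k j)) (Ordinal (hk i)).
Definition Fi (i : 'I_n) : pred (option BV) :=
  [pred o | if o is Some z then tag z == i else false].
Definition sel (w : {ffun 'I_n -> option BV}) i := odflt (dflt i) (w i).
Definition hh (w : {ffun 'I_n -> option BV}) i := psi (sel w i).

Lemma cardFi i : #|Fi i| = k i.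
Proof.
rewrite -[RHS]card_ord -cardsT.
rewrite -(@card_imset _ _ (fun j : 'I_(k i) => Some (Tagged (fun j => 'I_(k j)) j : BV))); last first.
  by move=> a b [] h; apply: eq_from_Tagged h.
apply: eq_card => o; rewrite inE; apply/idP/imsetP => [|[j _ ->]] //=.
case: o => [z|] //= /eqP p; exists (etagged p); first by rewrite inE.
by rewrite etaggedK.
Qed.

Lemma Wsel (V : {set 'I_n}) w : w \in pfamily None V Fi ->
  forall i, i \in V -> w i = Some (sel w i) /\ tag (sel w i) = i.
Proof.
move/pfamilyP => [_ H] i iV; have := H i iV; rewrite /sel inE.
by case: (w i) => // z /eqP.
Qed.

Lemma Wnone (V : {set 'I_n}) w : w \in pfamily None V Fi ->
  forall i, i \notin V -> w i = None.
Proof.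
move/pfamilyP => [/fintype.subsetP S _] i iV; apply/eqP; apply: contraNT iV => h.
by apply: S; rewrite inE.
Qed.

Definition Lf (cw : ({set 'I_n} * hgraph n) * {ffun 'I_n -> option BV})
  : {set 'I_N} * hgraph N :=
  (hh cw.2 @: cw.1.1, (fun e : {set 'I_n} => hh cw.2 @: e) @: cw.1.2).

Definition Fb := pullback phi (blowup r k E).

Lemma key (V : {set 'I_n}) w : w \in pfamily None V Fi ->
  forall i, i \in V -> tag (phi (hh w i)) = i.
Proof. by move=> hw i iV; rewrite /hh psiK; case: (Wsel hw iV). Qed.

Lemma csub (V : {set 'I_n}) (E' : hgraph n) e :
  (V, E') \in cset Q E [set: 'I_n]%SET -> e \in E' -> e \subset V.
Proof.
rewrite inE => /and3P[_ _ /existsP[f /and3P[_ /eqP /= fV /eqP /= fE']]].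
rewrite fE' => /imsetP[q _ ->]; rewrite -fV; apply: imsetS.
by apply/fintype.subsetP.
Qed.

Lemma Lf_mem V E' w : (V, E') \in cset Q E [set: 'I_n]%SET ->
  w \in pfamily None V Fi -> Lf ((V, E'), w) \in cset Q Fb [set: 'I_N]%SET.
Proof.
move=> hc hw; have hc' := hc.
move: hc'; rewrite inE => /and3P[_ sE' /existsP[f /and3P[/injectiveP fi /eqP /= fV /eqP /= fE']]].
have hinj : {in V &, injective (hh w)}.
  by move=> i j iV jV hij; rewrite -(key hw iV) hij (key hw jV).
have fVm j : f j \in V by rewrite -fV; apply: imset_f.
rewrite inE /=; apply/and3P; split.
- by apply/fintype.subsetP.
- apply/fintype.subsetP => _ /imsetP[e eE' ->].
  have eV := csub hc eE'.
  have ee : phi @: (hh w @: e) = sel w @: e.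
    by rewrite -imset_comp; apply: eq_imset => i /=; rewrite /hh psiK.
  rewrite /Fb /pullback inE /blowup inE ee; apply/andP; split.
    rewrite card_in_imset.
      by move: Eu => /forallP/(_ e)/implyP; apply; apply: (fintype.subsetP sE').
    move=> i j ie je hij; have iV := fintype.subsetP eV i ie.
    have jV := fintype.subsetP eV j je.
    by case: (Wsel hw iV) => _ <-; case: (Wsel hw jV) => _ <-; rewrite hij.
  rewrite -imset_comp (eq_in_imset (g := id)); first by rewrite imset_id; apply: (fintype.subsetP sE').
  by move=> i ie /=; case: (Wsel hw (fintype.subsetP eV i ie)).
- apply/existsP; exists [ffun j => hh w (f j)]; apply/and3P; split.
  + apply/injectiveP => j1 j2; rewrite !ffunE => /hinj h.
    by apply: fi; apply: h.
  + rewrite -fV -imset_comp; apply/eqP/eq_imset => j; rewrite ffunE.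
    by [].
  + rewrite fE' -imset_comp; apply/eqP/eq_imset => q /=; rewrite -imset_comp.
    by apply: eq_imset => j; rewrite ffunE.
Qed.

Lemma back V E' w : (V, E') \in cset Q E [set: 'I_n]%SET ->
  w \in pfamily None V Fi ->
  (fun v => tag (phi v)) @: (hh w @: V) = V /\
  (fun e' : {set 'I_N} => (fun v => tag (phi v)) @: e') @:
     ((fun e : {set 'I_n} => hh w @: e) @: E') = E'.
Proof.
move=> hc hw.
have H (A : {set 'I_n}) : A \subset V -> (fun v => tag (phi v)) @: (hh w @: A) = A.
  move=> AV; rewrite -imset_comp (eq_in_imset (g := id)) ?imset_id //.
  by move=> i iA /=; rewrite (key hw (fintype.subsetP AV i iA)).
split; first exact: H.
rewrite -imset_comp (eq_in_imset (g := id)) ?imset_id //.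
by move=> e eE' /=; rewrite H // (csub hc eE').
Qed.

Definition Pairs := [set cw : ({set 'I_n} * hgraph n) * {ffun 'I_n -> option BV} |
  (cw.1 \in cset Q E [set: 'I_n]%SET) && (cw.2 \in pfamily None cw.1.1 Fi)].

Lemma PairsP cw : (cw \in Pairs) =
  (cw.1 \in cset Q E [set: 'I_n]%SET) && (cw.2 \in pfamily None cw.1.1 Fi).
Proof. by rewrite /Pairs finset.in_set. Qed.

Lemma Lf_inj : {in Pairs &, injective Lf}.
Proof.
move=> [[V1 E1] w1] [[V2 E2] w2]; rewrite !PairsP /= => /andP[hc1 hw1] /andP[hc2 hw2].
rewrite /Lf /= => -[hV hE].
have [b1 b1'] := back hc1 hw1; have [b2 b2'] := back hc2 hw2.
have eV : V1 = V2 by rewrite -b1 hV b2.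
have eE : E1 = E2 by rewrite -b1' hE b2'.
subst V2 E2; congr (_, _); apply/ffunP => i.
case: (boolP (i \in V1)) => iV; last by rewrite (Wnone hw1 iV) (Wnone hw2 iV).
case: (Wsel hw1 iV) => -> t1; case: (Wsel hw2 iV) => -> t2; congr Some.
have : hh w1 i \in hh w2 @: V1 by rewrite -hV; apply: imset_f.
case/imsetP => j jV hj.
have eij : i = j by rewrite -(key hw1 iV) hj (key hw2 jV).
subst j; move: hj; rewrite /hh => /(can_inj psiK).
by [].
Qed.

Lemma blow_count :
  (\sum_(c in cset Q E [set: 'I_n]%SET) \prod_(i in c.1) k i
     <= #|cset Q Fb [set: 'I_N]%SET|)%N.
Proof.
have -> : (\sum_(c in cset Q E [set: 'I_n]%SET) \prod_(i in c.1) k i =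
    #|Pairs|)%N.
  transitivity (\sum_(c in cset Q E [set: 'I_n]%SET)
                   \sum_(w in pfamily None c.1 Fi) 1)%N.
    apply: eq_bigr => c _; rewrite sum1_card card_pfamily foldrE big_map big_enum.
    by apply: eq_bigr => i _; rewrite cardFi.
  rewrite pair_big_dep sum1_card; apply: eq_card => cw.
  by rewrite PairsP.
rewrite -(card_in_imset Lf_inj); apply: subset_leq_card.
apply/fintype.subsetP => _ /imsetP[[[V E'] w] + ->]; rewrite PairsP /= => /andP[hc hw].
exact: Lf_mem.
Qed.

End Blow.

Lemma card_BV n (k : 'I_n -> nat) : #|{: blowup_vert k}| = (\sum_i k i)%N.
Proof.
rewrite card_tagged sumnE big_map big_enum /=.
by apply: eq_bigr => i _; rewrite card_ord.
Qed.

Lemma blow_ex r s n (Q : hgraph s) (P : hprop) (E : hgraph n) (k : 'I_n -> nat) :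
  prop_of_rgraphs r P -> Defs.multiplicative r P -> P n E ->
  (forall i, (0 < k i)%N) ->
  (\sum_(c in cset Q E [set: 'I_n]%SET) \prod_(i in c.1) k i
     <= exQ Q P (\sum_i k i))%N.
Proof.
move=> Pu Pm PE hk; set N := (\sum_i k i)%N.
have e : #|{: blowup_vert k}| = N by rewrite card_BV.
pose phi (i : 'I_N) : blowup_vert k := enum_val (cast_ord (esym e) i).
pose psi (z : blowup_vert k) : 'I_N := cast_ord e (enum_rank z).
have phiK : cancel phi psi by move=> i; rewrite /phi /psi enum_valK cast_ordKV.
have psiK : cancel psi phi by move=> z; rewrite /phi /psi cast_ordK enum_rankK.
have PF := Pm n E k hk PE N phi (Bijective phiK psiK).
apply: leq_trans (@blow_count r s n Q E (Pu n E PE) k hk N phi psi psiK) _.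
by apply: (@leq_bigmax_cond _ (fun E => P N E) (fun E => copies Q E)).
Qed.

Unset Implicit Arguments.
End PartC.

Module PartD.
Unset Implicit Arguments.
Import PartA PartB PartC.

Import Order.TTheory GRing.Theory Num.Theory numFieldNormedType.Exports.
Local Open Scope ring_scope.
Local Open Scope classical_set_scope.

Section Main.
Variable R : realType.
Variables (r s : nat) (Q : hgraph s) (P : hprop).
Hypotheses (hs : (0 < s)%N) (Pu : prop_of_rgraphs r P) (Pm : Defs.multiplicative r P).

Let K : R := (s`!)%:R.
Definition dd (m : nat) : R := K * (exQ Q P m)%:R / (m%:R ^+ s).

Lemma K_gt0 : 0 < K. Proof. by rewrite /K ltr0n fact_gt0. Qed.

Lemma exQ_le m : (exQ Q P m <= m ^ s)%N.
Proof. by apply/bigmax_leqP => E _; apply: copies_le. Qed.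

Lemma dd_ge0 m : 0 <= dd m.
Proof. by rewrite /dd mulr_ge0 // ?mulr_ge0 // ?invr_ge0 // ltW // K_gt0. Qed.

Lemma dd_le m : dd m <= K.
Proof.
rewrite /dd; case: m => [|m]; first by rewrite expr0n gtn_eqF // invr0 mulr0 ltW // K_gt0.
rewrite -mulrA ger_pMr ?K_gt0 // ler_pdivrMr ?mul1r ?exprn_gt0 // -natrX ler_nat.
exact: exQ_le.
Qed.

Definition SS : R := sup (range dd).

Lemma hasS : has_sup (range dd).
Proof.
split; first by exists (dd 0); exists 0%N.
by exists K => _ [m _ <-]; exact: dd_le.
Qed.

Lemma dd_leS m : dd m <= SS.
Proof. by apply: ub_le_sup; [case: hasS | exists m]. Qed.

Lemma SS_ge0 : 0 <= SS.
Proof. exact: le_trans (dd_ge0 0) (dd_leS 0). Qed.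

Lemma PQH_blow n (E : hgraph n) (k : 'I_n -> nat) : P n E -> (forall i, (0 < k i)%N) ->
  PQH Q E (fun i => (k i)%:R) <= K * (exQ Q P (\sum_i k i))%:R.
Proof.
move=> PE hk; rewrite PQH_copies; apply: ler_wpM2l; first exact: ltW K_gt0.
apply: (@le_trans _ _ ((\sum_(c in cset Q E [set: 'I_n]%SET) \prod_(i in c.1) k i)%N)%:R).
  rewrite natr_sum; apply: ler_sum => c _; rewrite natr_prod; exact: lexx.
rewrite ler_nat; exact: (blow_ex Q Pu Pm PE hk).
Qed.

Lemma PQH_leS n (E : hgraph n) (x : 'I_n -> R) : P n E ->
  (forall i, 0 <= x i) -> \sum_i x i = 1 -> PQH Q E x <= SS.
Proof.
move=> PE x0 x1.
have n0 : (0 < n)%N.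
  by case: n E x PE x0 x1 => // E x _ _; rewrite big_ord0 => /eqP; rewrite eq_sym oner_eq0.
have H (m : nat) : (0 < m)%N -> PQH Q E x <= SS * (1 + n%:R / m%:R) ^+ s.
  move=> m0.
  pose k (i : 'I_n) := (Num.trunc (m%:R * x i)).+1.
  have hk i : (0 < k i)%N by [].
  set N := (\sum_i k i)%N.
  have N0 : (0 < N)%N.
    by rewrite /N (bigD1 (Ordinal n0)) //= addn_gt0 hk.
  have HN : N%:R <= m%:R + n%:R :> R.
    rewrite /N natr_sum.
    have -> : m%:R + n%:R = \sum_(i < n) (m%:R * x i + 1) :> R.
      by rewrite big_split /= -mulr_sumr x1 mulr1 sumr_const card_ord.
    apply: ler_sum => i _; rewrite /k -addn1 natrD lerD2r.
    by rewrite truncn_le mulr_ge0.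
  have h1 : PQH Q E (fun i => m%:R * x i) <= PQH Q E (fun i => (k i)%:R).
    apply: PQH_le => i; rewrite mulr_ge0 //=; apply: ltW; exact: truncnS_gt.
  have h2 := PQH_blow n E k PE hk.
  rewrite PQH_scale in h1.
  have h3 : K * (exQ Q P N)%:R = dd N * N%:R ^+ s.
    by rewrite /dd divfK // expf_neq0 // pnatr_eq0 -lt0n.
  have h4 : dd N * N%:R ^+ s <= SS * (m%:R + n%:R) ^+ s.
    apply: ler_pM => //; [exact: dd_ge0|exact: dd_leS|].
    by apply: lerXn2r => //; rewrite nnegrE.
  have mp : 0 < m%:R :> R by rewrite ltr0n.
  have -> : 1 + n%:R / m%:R = (m%:R + n%:R) / m%:R :> R.
    by rewrite mulrDl divff // gt_eqF.
  rewrite expr_div_n mulrA ler_pdivlMr ?exprn_gt0 // mulrC.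
  by apply: le_trans h4; rewrite -h3; apply: le_trans h1 h2.
have cv : (fun N : nat => SS * (1 + n%:R / N%:R) ^+ s) @ \oo --> SS * 1.
  by apply: cvgM; [exact: cvg_cst| exact: cvg_ratio].
rewrite mulr1 in cv.
rewrite -(cvg_lim (@Rhausdorff R) cv).
apply: limr_ge; first by apply/cvg_ex; exists SS.
near=> m; apply: H; near: m; exact: nbhs_infty_ge.
Unshelve. all: end_near.
Qed.

Lemma pnorm1 (p : R) n (x : 'I_n -> R) : 1 <= p -> pnorm p x = 1 ->
  \sum_i `|x i| `^ p = 1.
Proof.
move=> hp; rewrite /pnorm => /eqP; rewrite powR_eq1 => /or3P[/eqP -> //| |].
  by rewrite ltNge sumr_ge0 // => i _; rewrite powR_ge0.
by rewrite invr_eq0 => /eqP p0; move: hp; rewrite p0 ler10.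
Qed.

Lemma power_mean (p : R) n (a : 'I_n -> R) : 1 <= p -> (0 < n)%N ->
  (forall i, 0 <= a i) -> \sum_i a i `^ p = 1 -> \sum_i a i <= n%:R `^ (1 - p^-1).
Proof.
move=> hp n0 a0 h.
case: (eqVneq p 1) => [p1|p1].
  subst p; rewrite invr1 subrr powRr0 -h.
  by apply: ler_sum => i _; rewrite powRr1.
have hp1 : 1 < p by rewrite lt_neqAle eq_sym p1 hp.
have p0 : 0 < p by apply: lt_trans hp1.
have pm1 : 0 < p - 1 by rewrite subr_gt0.
pose q := p / (p - 1).
have q0 : 0 < q by rewrite divr_gt0.
have qinv : q^-1 = 1 - p^-1.
  by rewrite /q invf_div; field; rewrite gt_eqF.
have pq : p^-1 + q^-1 = 1 by rewrite qinv addrC subrK.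
have nR : 0 < n%:R :> R by rewrite ltr0n.
pose t := n%:R `^ (- q^-1).
have t0 : 0 < t by rewrite powR_gt0.
have tq : t `^ q = n%:R^-1.
  by rewrite -powRrM mulNr mulVf ?gt_eqF // powR_inv1 // ltW.
have H : (\sum_i a i) * t <= 1.
  rewrite mulr_suml.
  apply: (@le_trans _ _ (\sum_i (a i `^ p / p + t `^ q / q))).
    by apply: ler_sum => i _; apply: conjugate_powR => //; exact: ltW.
  rewrite big_split /= -mulr_suml h sumr_const card_ord tq.
  rewrite -mulrnAl -mulr_natr mulVf ?gt_eqF // mul1r div1r pq; exact: lexx.
have -> : n%:R `^ (1 - p^-1) = t^-1.
  by rewrite /t powRN invrK qinv.
by rewrite -[X in _ <= X]mul1r ler_pdivlMr.
Qed.

Definition Bn (p : R) n := SS * (n%:R `^ (1 - p^-1)) ^+ s.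

Lemma Bn_ge0 p n : 0 <= Bn p n.
Proof. by rewrite /Bn mulr_ge0 ?SS_ge0 // exprn_ge0 // powR_ge0. Qed.

Lemma PQH_le_pow (p : R) n (E : hgraph n) (x : 'I_n -> R) : 1 <= p -> (0 < n)%N ->
  P n E -> pnorm p x = 1 -> PQH Q E x <= Bn p n.
Proof.
move=> hp n0 PE hx.
apply: le_trans (PQH_abs R s n Q E x) _.
set T := \sum_i `|x i|.
have HT : T <= n%:R `^ (1 - p^-1).
  by apply: power_mean => //; exact: pnorm1.
have T0 : 0 <= T by rewrite sumr_ge0.
have Hb : PQH Q E (fun i => `|x i|) <= SS * T ^+ s.
  case: (eqVneq T 0) => [Tz|Tnz].
    have a0 i : `|x i| = 0.
      exact: (@psumr_eq0P R _ predT (fun i => `|x i|) (fun j _ => normr_ge0 _) Tz i).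
    have -> : (fun i => `|x i|) = (fun i => 0 * 1).
      by apply: funext => i; rewrite mul0r a0.
    by rewrite PQH_scale Tz !expr0n gtn_eqF // mul0r mulr0.
  have Tp : 0 < T by rewrite lt_neqAle eq_sym Tnz T0.
  have -> : (fun i => `|x i|) = (fun i => T * (`|x i| / T)).
    by apply: funext => i; rewrite mulrC divfK.
  rewrite PQH_scale mulrC ler_wpM2r ?exprn_ge0 //.
  apply: PQH_leS => //; first by move=> i; rewrite divr_ge0.
  by rewrite -mulr_suml divff.
apply: le_trans Hb _; rewrite /Bn ler_wpM2l ?SS_ge0 //.
by apply: lerXn2r => //; rewrite nnegrE powR_ge0.
Qed.

Lemma ub_lambdaH (p : R) n (E : hgraph n) : 1 <= p -> (0 < n)%N -> P n E ->
  ubound [set PQH Q E x | x in [set x : 'I_n -> R | pnorm p x = 1]] (Bn p n).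
Proof. by move=> hp n0 PE _ [x hx <-]; exact: PQH_le_pow. Qed.

Lemma lambdaH_le (p : R) n (E : hgraph n) : 1 <= p -> (0 < n)%N -> P n E ->
  lambdaH p Q E <= Bn p n.
Proof.
move=> hp n0 PE; rewrite /lambdaH.
case: (eqVneq [set PQH Q E x | x in [set x : 'I_n -> R | pnorm p x = 1]] set0)
  => [->|/set0P ne]; first by rewrite sup0 Bn_ge0.
exact: ge_sup ne (ub_lambdaH p n E hp n0 PE).
Qed.

Lemma lambdaH_ge (p : R) n (E : hgraph n) : 1 <= p -> (0 < n)%N -> P n E ->
  K * (copies Q E)%:R * (n%:R `^ (- p^-1)) ^+ s <= lambdaH p Q E.
Proof.
move=> hp n0 PE.
have nR : 0 < n%:R :> R by rewrite ltr0n.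
have p0 : 0 < p by apply: lt_le_trans hp.
pose u := fun _ : 'I_n => n%:R `^ (- p^-1) * 1.
have pu : pnorm p u = 1.
  rewrite /pnorm /u.
  under eq_bigr do rewrite mulr1 ger0_norm ?powR_ge0 // -powRrM mulNr mulVf ?gt_eqF // powR_inv1 ?ltW //.
  by rewrite sumr_const card_ord -[n%:R^-1 *+ n]mulr_natr mulVf ?gt_eqF // powR1.
have -> : K * (copies Q E)%:R * (n%:R `^ (- p^-1)) ^+ s = PQH Q E u.
  rewrite PQH_scale mulrC; congr (_ * _); rewrite PQH_copies; congr (_ * _).
  under eq_bigr do rewrite prodr_const expr1n.
  by rewrite sumr_const.
apply: ub_le_sup; last by exists u.
by exists (Bn p n); exact: ub_lambdaH.
Qed.

Lemma lambdaPn_le (p : R) n : 1 <= p -> (0 < n)%N -> lambdaPn p Q P n <= Bn p n.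
Proof.
move=> hp n0; rewrite /lambdaPn.
case: (eqVneq [set lambdaH p Q E | E in [set E : hgraph n | P n E]] set0)
  => [->|/set0P ne]; first by rewrite sup0 Bn_ge0.
by apply: ge_sup ne _ => _ [E PE <-]; exact: lambdaH_le.
Qed.

Lemma lambdaPn_ge (p : R) n : 1 <= p -> (0 < n)%N ->
  K * (exQ Q P n)%:R * (n%:R `^ (- p^-1)) ^+ s <= lambdaPn p Q P n.
Proof.
move=> hp n0; rewrite /lambdaPn.
case: (pselect (exists E, P n E)) => [[E0 PE0]|nE].
  have : (0 < #|[pred E : hgraph n | P n E]|)%N by apply/card_gt0P; exists E0.
  move/(eq_bigmax_cond (fun E => copies Q E)) => [E1 PE1 hE1].
  have -> : exQ Q P n = copies Q E1.
    by rewrite /exQ -hE1; apply: eq_bigl => E; rewrite inE.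
  rewrite inE in PE1.
  apply: le_trans (lambdaH_ge p n E1 hp n0 PE1) _.
  apply: ub_le_sup; last by exists E1.
  by exists (Bn p n) => _ [E PE <-]; exact: lambdaH_le.
have -> : exQ Q P n = 0%N.
  by rewrite /exQ big_pred0 // => E; apply/negP => h; apply: nE; exists E.
have -> : [set lambdaH p Q E | E in [set E : hgraph n | P n E]] = set0.
  by apply/seteqP; split => // y [E hE _]; exfalso; apply: nE; exists E.
by rewrite sup0 mulr0 mul0r.
Qed.

Lemma powR_pow (x a : R) m : (x `^ a) ^+ m = x `^ (a * m%:R).
Proof. by rewrite -powR_mulrn ?powR_ge0 // -powRrM. Qed.

Lemma lam_bounds (p : R) n : 1 <= p -> (0 < n)%N ->
  dd n <= lambdaPn p Q P n * n%:R `^ (s%:R / p - s%:R) <= SS.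
Proof.
move=> hp n0.
have p0 : p != 0 by rewrite gt_eqF // (lt_le_trans _ hp).
have nR : n%:R != 0 :> R by rewrite pnatr_eq0 -lt0n.
have al0 : 0 <= n%:R `^ (s%:R / p - s%:R) :> R by rewrite powR_ge0.
apply/andP; split.
  apply: le_trans (ler_wpM2r al0 (lambdaPn_ge p n hp n0)).
  rewrite -!mulrA powR_pow -powRD; last by apply/implyP.
  have -> : - p^-1 * s%:R + (s%:R / p - s%:R) = - s%:R by field.
  by rewrite powR_invn ?ler0n // /dd mulrA.
apply: le_trans (ler_wpM2r al0 (lambdaPn_le p n hp n0)) _.
rewrite /Bn -mulrA powR_pow -powRD; last by apply/implyP.
have -> : (1 - p^-1) * s%:R + (s%:R / p - s%:R) = 0 by field.
by rewrite powRr0 mulr1.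
Qed.

Lemma dd0 : dd 0 = 0.
Proof. by rewrite /dd expr0n gtn_eqF // invr0 mulr0. Qed.

Lemma dd_lower n0 N : (0 < N)%N -> (n0 <= N)%N ->
  (1 + (- n0%:R) / N%:R) ^+ s * dd n0 <= dd N.
Proof.
move=> N0 hnN.
have NR : 0 < N%:R :> R by rewrite ltr0n.
have a0 : 0 <= 1 + (- n0%:R) / N%:R :> R.
  by rewrite mulNr subr_ge0 ler_pdivrMr // mul1r ler_nat.
case: (posnP n0) => [->|n0p]; first by rewrite dd0 mulr0 dd_ge0.
case: (pselect (exists E, P n0 E)) => [[E0 PE0]|nE]; last first.
  have -> : dd n0 = 0.
    rewrite /dd; have -> : exQ Q P n0 = 0%N.
      by rewrite /exQ big_pred0 // => E; apply/negP => h; apply: nE; exists E.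
    by rewrite mulr0 mul0r.
  by rewrite mulr0 dd_ge0.
have : (0 < #|[pred E : hgraph n0 | P n0 E]|)%N by apply/card_gt0P; exists E0.
move/(eq_bigmax_cond (fun E => copies Q E)) => [E1 PE1 hE1].
have hex : exQ Q P n0 = copies Q E1.
  by rewrite /exQ -hE1; apply: eq_bigl => E; rewrite inE.
rewrite inE in PE1.
set q := (N %/ n0)%N.
have q0 : (0 < q)%N by rewrite divn_gt0.
pose i0 : 'I_n0 := Ordinal n0p.
pose k (i : 'I_n0) := if i == i0 then (q + N %% n0)%N else q.
have hk i : (0 < k i)%N by rewrite /k; case: (i == i0) => //; rewrite addn_gt0 q0.
have sk : (\sum_i k i)%N = N.
  rewrite (bigD1 i0) //= /k eqxx.
  rewrite (eq_bigr (fun=> q)); last by move=> i /negbTE ->.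
  rewrite sum_nat_const cardC1 card_ord /=.
  rewrite [in RHS](divn_eq N n0) -/q [(n0.-1 * q)%N]mulnC.
  have -> : (q * n0 = q + q * n0.-1)%N by rewrite -{1}(prednK n0p) mulnS.
  by rewrite addnAC.
have h1 : PQH Q E1 (fun _ => (q%:R : R) * 1) <= PQH Q E1 (fun i => (k i)%:R).
  apply: PQH_le => i; rewrite mulr1 ler0n /= ler_nat /k.
  by case: (i == i0) => //; rewrite leq_addr.
have h2 := PQH_blow n0 E1 k PE1 hk.
rewrite sk in h2.
have h3 : PQH Q E1 (fun _ => (q%:R : R) * 1) = q%:R ^+ s * (K * (exQ Q P n0)%:R).
  rewrite PQH_scale hex; congr (_ * _); rewrite PQH_copies; congr (_ * _).
  under eq_bigr do rewrite prodr_const expr1n.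
  by rewrite sumr_const.
have hq : 1 + (- n0%:R) / N%:R <= q%:R * n0%:R / N%:R :> R.
  rewrite mulNr -[X in X - _](divff (negbT (gt_eqF NR))) -mulrBl ler_pM2r ?invr_gt0 //.
  rewrite lerBlDr -!natrM -natrD ler_nat.
  rewrite {1}(divn_eq N n0) -/q leq_add2l ltnW //.
  by rewrite ltn_pmod.
have n0R : n0%:R != 0 :> R by rewrite pnatr_eq0 -lt0n.
apply: (le_trans (ler_wpM2r (dd_ge0 _) (lerXn2r s _ _ hq))).
- by rewrite nnegrE.
- by rewrite nnegrE divr_ge0 // mulr_ge0.
have -> : (q%:R * n0%:R / N%:R) ^+ s * dd n0 = (q%:R ^+ s * (K * (exQ Q P n0)%:R)) / N%:R ^+ s.
  rewrite /dd !expr_div_n exprMn.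
  by field; rewrite !expf_neq0 // (negbT (gt_eqF NR)).
rewrite ler_pdivrMr ?exprn_gt0 // -h3.
apply: le_trans h1 _; apply: le_trans h2 _.
by rewrite /dd divfK // expf_neq0 // (negbT (gt_eqF NR)).
Qed.

Lemma dd_cvg : dd @ \oo --> SS.
Proof.
apply/cvgrPdist_lt => e e0.
have [_ [m _ <-] hm] := sup_adherent e0 hasS.
have cv : (fun N : nat => (1 + (- m%:R) / N%:R) ^+ s * dd m) @ \oo --> 1 * dd m.
  by apply: cvgM; [exact: cvg_ratio | exact: cvg_cst].
rewrite mul1r in cv.
have H := cvgr_gt _ cv _ hm.
near=> N.
have hN : (maxn m 1 <= N)%N by near: N; exact: nbhs_infty_ge.
have hN1 : (0 < N)%N by apply: leq_trans hN; rewrite leq_max orbT.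
have hN2 : (m <= N)%N by apply: leq_trans hN; rewrite leq_max leqnn.
have h1 : SS - e < (1 + (- m%:R) / N%:R) ^+ s * dd m by near: N; exact: H.
have h2 := dd_lower m N hN1 hN2.
have h3 := dd_leS N.
rewrite ger0_norm ?subr_ge0 //; lra.
Unshelve. all: end_near.
Qed.

Lemma lam_cvg (p : R) : 1 <= p ->
  (fun n : nat => lambdaPn p Q P n * n%:R `^ (s%:R / p - s%:R)) @ \oo --> SS.
Proof.
move=> hp.
apply: (@squeeze_cvgr _ _ _ _ dd (fun=> SS)); [|exact: dd_cvg|exact: cvg_cst].
near=> n; apply: lam_bounds => //; near: n; exact: nbhs_infty_ge.
Unshelve. all: end_near.
Qed.

Definition cc (n : nat) : R := K * ('C(n, s))%:R / n%:R ^+ s.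

Lemma cc_eq n : K * ('C(n, s))%:R = \prod_(i < s) (n - i)%:R.
Proof. by rewrite /K -natrM mulnC bin_ffact ffact_prod natr_prod. Qed.

Lemma cc_bounds n : (s <= n)%N -> (0 < n)%N ->
  (1 + (- s%:R) / n%:R) ^+ s <= cc n <= 1.
Proof.
move=> sn n0.
have nR : 0 < n%:R :> R by rewrite ltr0n.
rewrite /cc cc_eq; apply/andP; split.
  have -> : 1 + (- s%:R) / n%:R = (n - s)%:R / n%:R :> R.
    by rewrite natrB // mulNr -[X in X - _](divff (negbT (gt_eqF nR))) -mulrBl.
  rewrite expr_div_n ler_pM2r ?invr_gt0 ?exprn_gt0 //.
  have -> : (n - s)%:R ^+ s = \prod_(i < s) ((n - s)%:R : R) by rewrite prodr_const card_ord.
  apply: ler_prod => i _.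
  by rewrite ler0n /= ler_nat leq_sub2l // ltnW.
rewrite ler_pdivrMr ?exprn_gt0 // mul1r.
have -> : n%:R ^+ s = \prod_(i < s) (n%:R : R) by rewrite prodr_const card_ord.
apply: ler_prod => i _.
by rewrite ler0n /= ler_nat leq_subr.
Qed.

Lemma cc_cvg : cc @ \oo --> (1 : R).
Proof.
apply: (@squeeze_cvgr _ _ _ _ (fun n : nat => (1 + (- s%:R) / n%:R) ^+ s) (fun=> 1));
  [|exact: cvg_ratio|exact: cvg_cst].
near=> n; apply: cc_bounds.
- by near: n; exact: nbhs_infty_ge.
- by near: n; exact: nbhs_infty_ge.
Unshelve. all: end_near.
Qed.

Lemma e_cvg : (fun n : nat => (exQ Q P n)%:R / ('C(n, s))%:R : R) @ \oo --> SS.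
Proof.
have ec : (fun n => dd n * (cc n)^-1) @ \oo --> SS * 1^-1.
  by apply: cvgM; [exact: dd_cvg | apply: cvgV => //; exact: cc_cvg].
rewrite invr1 mulr1 in ec.
apply: cvg_trans ec; apply: near_eq_cvg.
near=> n.
have sn : (s <= n)%N by near: n; exact: nbhs_infty_ge.
have n0 : (0 < n)%N by apply: leq_trans sn.
have nR : n%:R ^+ s != 0 :> R by rewrite expf_neq0 // pnatr_eq0 -lt0n.
have cR : ('C(n, s))%:R != 0 :> R by rewrite pnatr_eq0 -lt0n bin_gt0.
have KR : K != 0 by rewrite gt_eqF // K_gt0.
rewrite /dd /cc /=; field.
by rewrite nR cR KR.
Unshelve. all: end_near.
Qed.

Lemma main_eq (p : R) : 1 <= p -> lambdaP p Q P = piQ R Q P.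
Proof.
move=> hp; rewrite /lambdaP /piQ (cvg_lim (@Rhausdorff R) (lam_cvg p hp)).
by rewrite (cvg_lim (@Rhausdorff R) e_cvg).
Qed.

End Main.

End PartD.

Local Open Scope ring_scope.

Theorem lemma3p11 (R : realType) (r s : nat) (Q : {set {set 'I_s}}) (P : hprop) :
  (2 <= r)%N -> (r <= s)%N ->
  uniform r Q ->
  prop_of_rgraphs r P ->
  hereditary P ->
  isolated_closed P ->
  multiplicative r P ->
  (forall p : R, 1 <= p -> lambdaP p Q P = piQ R Q P) /\ Qflat R Q P.
Proof.
move=> hr hrs Qu Pu Ph Pi Pm.
have hs : (0 < s)%N by apply: leq_trans hrs; apply: leq_trans hr.
split; first by move=> p hp; exact: (PartD.main_eq R r s Q P hs Pu Pm p hp).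
exact: (PartD.main_eq R r s Q P hs Pu Pm 1 (Order.POrderTheory.lexx _)).
Qed.
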